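(* Let $T$ be a leaf-positive ultrametric tree of radius $1$ with $n$ leaves, let $D$ be its leaf distance matrix, and let $c_T$ be the smallest nonnegative real number $c$ such that $c\,\mathbf{1}_{n\times n}-\frac12D$ is positive semidefinite. Then $c_T=1-\frac1n$ if and only if $T$ is a star-metric.
   Context: An ultrametric tree is a rooted tree with nonnegative edge lengths (zero lengths allowed) such that all leaves have the same distance from the root (the radius). The leaf distance matrix $D$ has $(i,j)$ entry the path-length distance between leaves $i,j$; $\mathbf{1}_{n\times n}$ is the all-ones matrix. The constant $c_T$ exists and satisfies $c_T\le 1-\frac1n$, since the set of such $c$ is closed and contains $1-\frac1n$ but not $0$. The height $H(v)$ of a vertex is the distance from $v$ to its furthest descendant, and $i\vee j$ is the lowest common ancestor of distinct vertices $i,j$. $T$ is leaf-positive if every edge adjacent to a leaf has positive length. $T$ is a star-metric if for any two distinct leaves $i,j$, $H(i\vee j)\in\{0,1\}$. *)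

(* Defs.v *)
From HB Require Import structures.
From mathcomp Require Import all_boot all_order all_algebra.
From mathcomp Require Import reals.
Set Implicit Arguments. Unset Strict Implicit. Unset Printing Implicit Defensive.
Import Order.TTheory GRing.Theory Num.Theory.
Local Open Scope ring_scope.

(* A rooted tree with (ordered) children; each child is attached by an edge
   carrying a length.  A leaf is a node without children. *)
Inductive tree (R : Type) : Type := Node of seq (R * tree R).
Arguments Node {R}.

Section Trees.
Variable R : realType.

Definition is_leaf (t : tree R) : bool := let: Node l := t in nilp l.

Fixpoint all_edges (P : R -> tree R -> bool) (t : tree R) : bool :=
  let: Node l := t in
  (fix go (l : seq (R * tree R)) : bool :=
     match l with
     | [::] => true
     | (a, s) :: l' => [&& P a s, all_edges P s & go l']
     end) l.

(* The leaves of t, each given by its root-to-leaf path: the list of edges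
   (child index, edge length) followed from the root.  The enumeration order
   fixes the indexing 0..n-1 of the leaves. *)
Fixpoint leaf_paths (t : tree R) : seq (seq (nat * R)) :=
  let: Node l := t in
  if l is [::] then [:: [::]] else
  (fix go (k : nat) (l : seq (R * tree R)) : seq (seq (nat * R)) :=
     match l with
     | [::] => [::]
     | (a, s) :: l' => map (cons (k, a)) (leaf_paths s) ++ go k.+1 l'
     end) 0%N l.

Definition nleaves (t : tree R) : nat := size (leaf_paths t).

Definition plen (p : seq (nat * R)) : R := \sum_(e <- p) e.2.

Fixpoint pdist (p q : seq (nat * R)) : R :=
  match p, q with
  | (k, _) :: p', (k', _) :: q' => if k == k' then pdist p' q' else plen p + plen q
  | _, _ => plen p + plen q
  end.

Definition leaf_path (t : tree R) (i : nat) : seq (nat * R) :=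
  nth [::] (leaf_paths t) i.

Definition leaf_dist_mx (t : tree R) : 'M[R]_(nleaves t) :=
  \matrix_(i, j) pdist (leaf_path t i) (leaf_path t j).

Definition ultrametric_radius (t : tree R) (r : R) : Prop :=
  all_edges (fun a _ => 0 <= a) t /\ forall p, p \in leaf_paths t -> plen p = r.

Definition leaf_positive (t : tree R) : Prop :=
  all_edges (fun a s => is_leaf s ==> (0 < a)) t.

Fixpoint subtree (t : tree R) (addr : seq nat) : tree R :=
  match addr with
  | [::] => t
  | k :: addr' => let: Node l := t in subtree (nth (0, Node [::]) l k).2 addr'
  end.

Definition height (t : tree R) : R := \big[Num.max/0]_(p <- leaf_paths t) plen p.

Fixpoint common_prefix (a b : seq nat) : seq nat :=
  match a, b with
  | x :: a', y :: b' => if x == y then x :: common_prefix a' b' else [::]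
  | _, _ => [::]
  end.

Definition lca_addr (t : tree R) (i j : nat) : seq nat :=
  common_prefix (map fst (leaf_path t i)) (map fst (leaf_path t j)).

Definition lca_height (t : tree R) (i j : nat) : R := height (subtree t (lca_addr t i j)).

Definition star_metric (t : tree R) : Prop :=
  forall i j : 'I_(nleaves t), i != j ->
    lca_height t i j = 0 \/ lca_height t i j = 1.

Definition psd (n : nat) (M : 'M[R]_n) : Prop :=
  forall x : 'cV[R]_n, 0 <= (x^T *m M *m x) 0 0.

Definition ctest (n : nat) (D : 'M[R]_n) (c : R) : Prop :=
  psd (c *: const_mx 1 - 2^-1 *: D).

Definition is_cT (n : nat) (D : 'M[R]_n) (c : R) : Prop :=
  [/\ 0 <= c, ctest D c & forall c', 0 <= c' -> ctest D c' -> c <= c'].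

End Trees.

(* Main.v *)
Require Import Defs.
From HB Require Import structures.
From mathcomp Require Import all_boot all_order all_algebra.
From mathcomp Require Import reals.
From mathcomp Require Import ring lra.
Set Implicit Arguments. Unset Strict Implicit. Unset Printing Implicit Defensive.
Import Order.TTheory GRing.Theory Num.Theory.
Local Open Scope ring_scope.

Section S.
Variable R : realType.
Local Notation dflt := ((0:R), @Node R [::]).

Fixpoint tree_ind2 (P : tree R -> Prop)
  (H : forall l, (forall k, (k < size l)%N -> P (nth dflt l k).2) -> P (Node l))
  (t : tree R) : P t :=
  let: Node l := t in H l ((fix go (l : seq (R * tree R)) :
     forall k, (k < size l)%N -> P (nth dflt l k).2 :=
     match l return forall k, (k < size l)%N -> P (nth dflt l k).2 with
     | [::] => fun k hk => ltac:(by rewrite ltn0 in hk)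
     | (a, s) :: l' => fun k => match k return (k < size ((a, s) :: l'))%N -> P (nth dflt ((a, s) :: l') k).2 with
                 | 0 => fun _ => tree_ind2 H s
                 | k'.+1 => fun hk => go l' k' hk end
     end) l).

Fixpoint lp_go (k : nat) (l : seq (R * tree R)) : seq (seq (nat * R)) :=
  match l with [::] => [::] | (a, s) :: l' => map (cons (k, a)) (leaf_paths s) ++ lp_go k.+1 l' end.

Lemma leaf_pathsE l : leaf_paths (Node l) = if l is [::] then [:: [::]] else lp_go 0 l.
Proof. by case: l. Qed.

Fixpoint ae_go (P : R -> tree R -> bool) (l : seq (R * tree R)) : bool :=
  match l with [::] => true | (a, s) :: l' => [&& P a s, all_edges P s & ae_go P l'] end.

Lemma all_edgesE P l : all_edges P (Node l) = ae_go P l.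
Proof. by elim: l => // -[a s] l /= ->. Qed.

Local Notation lp := (@leaf_paths R).
Implicit Types (p q r : seq (nat * R)) (e : nat * R).

Lemma lp_goP k0 l p : p \in lp_go k0 l <-> exists k p', (k < size l)%N /\
   p = (k0 + k, (nth dflt l k).1)%N :: p' /\ p' \in lp (nth dflt l k).2.
Proof.
elim: l k0 p => [|[a s] l IH] k0 p /=; first by split=> // -[k [p' [//]]].
rewrite mem_cat; split.
  case/orP=> [/mapP [p' hp' ->]|H].
    2: have := (iffLR (IH k0.+1 _)) H. 2: case => [k [p' [hk [-> hp']]]].
    by exists 0%N, p'; rewrite addn0.
  by exists k.+1, p'; rewrite addSnnS.
case=> [[|k] [p' [hk [-> hp']]]].
  by rewrite addn0 map_f.
apply/orP; right; apply: (iffRL (IH k0.+1 _)); exists k, p'; by rewrite addSnnS.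
Qed.

Lemma lpP l p : p \in lp (Node l) <-> (l = [::] /\ p = [::]) \/ exists k p', (k < size l)%N /\
   p = (k, (nth dflt l k).1) :: p' /\ p' \in lp (nth dflt l k).2.
Proof.
rewrite leaf_pathsE; case: l => [|x l].
  rewrite inE; split; first by move/eqP->; left.
  by case=> [[_ ->]|[k [p' [//]]]].
rewrite lp_goP; split; first by move=> H; right.
by case=> [[//]|].
Qed.

Lemma lp_uniq t : uniq (lp t).
Proof.
elim/tree_ind2: t => l IH; rewrite leaf_pathsE; case: l IH => [//|x l] IH.
move: (x :: l) IH 0%N => {x}l; elim: l => [//|[a s] l IHl] IH k0 /=.
rewrite cat_uniq; apply/and3P; split.
- by rewrite map_inj_uniq ?(IH 0%N) // => u v [].
- apply/hasPn => q /lp_goP [k [p' [hk [-> _]]]]; apply/mapP => -[r _ [e _ _]].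
  by have := leq_addr k k0.+1; rewrite e ltnn.
- by apply: IHl => k hk; apply: (IH k.+1).
Qed.

Lemma ae_child P l k : all_edges P (Node l) -> (k < size l)%N ->
  P (nth dflt l k).1 (nth dflt l k).2 && all_edges P (nth dflt l k).2.
Proof.
rewrite all_edgesE; elim: l k => [//|[a s] l IH] [|k] /= /and3P [h1 h2 h3] hk.
  by rewrite h1.
exact: IH.
Qed.

Lemma lp_nonneg t p : all_edges (fun a _ => 0 <= a) t -> p \in lp t -> all (fun e => 0 <= e.2) p.
Proof.
elim/tree_ind2: t p => l IH p He /lpP [[_ ->]//|[k [p' [hk [-> hp']]]]] /=.
by case/andP: (ae_child He hk) => -> h /=; apply: (IH k hk).
Qed.

Lemma lp_coh t p q : p \in lp t -> q \in lp t -> forall m,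
  map fst (take m p) = map fst (take m q) -> take m p = take m q.
Proof.
elim/tree_ind2: t p q => l IH p q /lpP [[-> ->]|[k [p' [hk [-> hp']]]]].
  by case/lpP=> [[_ ->]//|[k [q' []]]].
case/lpP=> [[hl _]|[k' [q' [hk' [-> hq']]]]]; first by rewrite hl in hk.
case=> [//|m] /= [ekk] hm; subst k'; congr cons; exact: (IH k hk).
Qed.

Fixpoint cpl (p q : seq (nat * R)) : R :=
  match p, q with
  | e :: p', f :: q' => if e.1 == f.1 then e.2 + cpl p' q' else 0
  | _, _ => 0 end.

Lemma plen_cons e p : plen (e :: p) = e.2 + plen p.
Proof. by rewrite /plen big_cons. Qed.

Lemma plen_nil : @plen R [::] = 0.
Proof. by rewrite /plen big_nil. Qed.

Lemma plen_cat p q : plen (p ++ q) = plen p + plen q :> R.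
Proof. by rewrite /plen big_cat. Qed.

Lemma lp_pdist t p q : p \in lp t -> q \in lp t ->
  pdist p q = plen p + plen q - 2 * cpl p q.
Proof.
elim/tree_ind2: t p q => l IH p q /lpP [[-> ->]|[k [p' [hk [-> hp']]]]].
  by move=> _ /=; rewrite mulr0 subr0.
case/lpP=> [[hl _]|[k' [q' [hk' [-> hq']]]]]; first by rewrite hl in hk.
rewrite /= !plen_cons; case: eqP => [ekk|_]; last by rewrite mulr0 subr0.
subst k'; rewrite (IH k hk p' q' hp' hq') /=; ring.
Qed.

Lemma cpl_refl p : cpl p p = plen p.
Proof. by elim: p => [|e p IH] /=; rewrite ?plen_nil ?plen_cons ?eqxx ?IH. Qed.

Lemma cpl_ge0 p q : all (fun e => 0 <= e.2) p -> 0 <= cpl p q.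
Proof.
elim: p q => [|e p IH] [|f q] //= /andP [h1 h2]; case: ifP => // _.
by rewrite addr_ge0 ?IH.
Qed.

Lemma plen_ge0 p : all (fun e => 0 <= e.2) p -> 0 <= plen p.
Proof. by elim: p => [|e p IH]; rewrite ?plen_nil ?plen_cons //= => /andP [h1 h2]; rewrite addr_ge0 ?IH. Qed.

Lemma plen_sum p B : (size p <= B)%N -> plen p = \sum_(m < B) (nth (0%N, 0) p m).2.
Proof.
elim: p B => [|e p IH] B hB.
  by rewrite plen_nil big1 // => i _; rewrite nth_nil.
case: B hB => // B hB.
by rewrite plen_cons big_ord_recl /= (IH B hB).
Qed.

Definition relp (m : nat) (p q : seq (nat * R)) : bool :=
  (m < size p)%N && (map fst (take m.+1 p) == map fst (take m.+1 q)).

Lemma cpl_sum p q B : (size p <= B)%N ->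
  cpl p q = \sum_(m < B) (if relp m p q then (nth (0%N, 0) p m).2 else 0).
Proof.
rewrite /relp; elim: p q B => [|e p IH] q B hB.
  by rewrite big1.
case: B hB => // B hB.
rewrite big_ord_recl /=; case: q => [|f q] /=.
  by rewrite big1 ?addr0 // => i _; rewrite andbF.
rewrite (IH q B hB) !take0 /= ?andbT.
case: (boolP (e.1 == f.1)) => ef.
  rewrite eqseq_cons ef /=; congr (_ + _); apply: eq_bigr => i _.
  by rewrite eqseq_cons ef.
rewrite eqseq_cons (negbTE ef) /= add0r big1 // => i _.
by rewrite eqseq_cons (negbTE ef) andbF.
Qed.


Lemma cp_take (a b : seq nat) : common_prefix a b = take (size (common_prefix a b)) a.
Proof.
elim: a b => [|x a IH] [|y b] //=; case: eqP => // _ /=; by rewrite -IH.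
Qed.

Lemma cp_take_r (a b : seq nat) : common_prefix a b = take (size (common_prefix a b)) b.
Proof.
elim: a b => [|x a IH] [|y b] //=; case: eqP => //= ->; by rewrite -IH.
Qed.

Lemma cpl_take p q : cpl p q = plen (take (size (common_prefix (map fst p) (map fst q))) p).
Proof.
elim: p q => [|e p IH] [|f q] /=; rewrite ?take0 ?plen_nil //.
by case: eqP => _ /=; rewrite ?take0 ?plen_nil ?plen_cons -?IH.
Qed.

Lemma lp_nil l : [::] \in lp (Node l) -> l = [::].
Proof. by case/lpP=> [[]//|[k [p' [_ []]]]]. Qed.

Lemma sub_drop t p m : p \in lp t -> drop m p \in lp (subtree t (map fst (take m p))).
Proof.
elim/tree_ind2: t p m => l IH p m /lpP [[-> ->]|[k [p' [hk [-> hp']]]]].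
  by [].
case: m => [|m].
  rewrite drop0 take0 /=; apply/lpP; right; by exists k, p'.
exact: IH.
Qed.

Lemma sub_cat t p m r : p \in lp t -> r \in lp (subtree t (map fst (take m p))) ->
  take m p ++ r \in lp t.
Proof.
elim/tree_ind2: t p m r => l IH p m r /lpP [[-> ->]|[k [p' [hk [-> hp']]]]].
  by move=> /=; rewrite inE => /eqP ->.
case: m => [|m]; first by rewrite take0.
move=> /= hr; apply/lpP; right; exists k, (take m p' ++ r); split=> //; split=> //.
exact: IH.
Qed.

Lemma lp_pos t p m : leaf_positive t -> all_edges (fun a _ => 0 <= a) t ->
  p \in lp t -> (m < size p)%N -> 0 < plen (drop m p).
Proof.
elim/tree_ind2: t p m => l IH p m Hl Hn /lpP [[_ ->]//|[k [p' [hk [-> hp']]]]].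
rewrite /leaf_positive in Hl IH *.
have /andP [hl1 hl2] := ae_child Hl hk.
have /andP [hn1 hn2] := ae_child Hn hk.
case: m => [|m] /= hm; first last. exact: (IH k hk p' m hl2 hn2 hp' hm).
rewrite plen_cons /=.
case: p' hp' hm => [|e p'] hp' _.
  move: hp' hl1; case: (nth dflt l k).2 => l' /lp_nil -> /= h.
  by rewrite plen_nil addr0.
by rewrite ltr_wpDl // (IH k hk (e :: p') 0%N hl2 hn2 hp').
Qed.

Lemma bigmax_const (s : seq (seq (nat * R))) h : (forall r, r \in s -> plen r = h) ->
  s != [::] -> 0 <= h -> \big[Num.max/0]_(r <- s) plen r = h.
Proof.
elim: s => [|x s IH] // H _ h0; rewrite big_cons H ?mem_head //.
case: s IH H => [|y s] IH H; first by rewrite big_nil max_l.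
rewrite IH ?maxxx // => r hr; apply: H; by rewrite inE hr orbT.
Qed.


Lemma cs_sum (I : finType) (a b : I -> R) : (forall i, 0 <= a i) -> 0 < \sum_i a i ->
  (\sum_i a i * b i) ^+ 2 <= (\sum_i a i) * (\sum_i a i * b i ^+ 2).
Proof.
move=> a0 A0; set A := \sum_i a i; set X := \sum_i a i * b i; set Y := \sum_i a i * b i ^+ 2.
have H : 0 <= \sum_i a i * (A * b i - X) ^+ 2.
  by apply: sumr_ge0 => i _; rewrite mulr_ge0 ?sqr_ge0.
have E : \sum_i a i * (A * b i - X) ^+ 2 = A * (A * Y - X ^+ 2).
  rewrite (eq_bigr (fun i => A ^+ 2 * (a i * b i ^+ 2) - (2 * A * X) * (a i * b i) + X ^+ 2 * a i)); last by move=> i _; ring.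
  rewrite big_split /= sumrB -!mulr_sumr -/Y -/X -/A; ring.
rewrite E pmulr_rge0 // in H; by rewrite -subr_ge0.
Qed.


Lemma relp_sym m p q : relp m p q -> relp m q p.
Proof.
rewrite /relp => /andP [hm /eqP e]; rewrite e eqxx andbT.
have := congr1 size e; rewrite !size_map !size_take_min => e2.
by apply/minn_idPl; rewrite -e2; apply/minn_idPl.
Qed.

Lemma relp_trans m p q r : relp m p q -> relp m q r -> relp m p r.
Proof. by move=> /andP [hm /eqP e1] /andP [_ /eqP e2]; rewrite /relp hm e1 e2 eqxx. Qed.

Lemma key n (P : 'I_n -> seq (nat * R)) i0 j0 :
  (forall i, all (fun e => 0 <= e.2) (P i)) ->
  (forall i, plen (P i) = 1) ->
  (forall i j m, relp m (P i) (P j) -> (nth (0%N,0) (P i) m).2 = (nth (0%N,0) (P j) m).2) ->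
  i0 != j0 -> 0 < cpl (P i0) (P j0) ->
  exists L, [/\ 0 < L, L < n%:R & forall x : 'I_n -> R,
     (\sum_i x i) ^+ 2 <= L * \sum_i \sum_j x i * x j * cpl (P i) (P j)].
Proof.
move=> Hnn H1 Hcoh ne Hpos.
pose B := (\max_(i < n) size (P i))%N.
have hB i : (size (P i) <= B)%N by rewrite /B; exact: (@leq_bigmax _ (fun i => size (P i)) i).
pose rel (m : 'I_B) i j := relp m (P i) (P j).
pose w i (m : 'I_B) := (nth (0%N,0) (P i) m).2.
pose N (m : 'I_B) i := \sum_(j | rel m i j) (1:R).
pose a (p : 'I_B * 'I_n) := w p.2 p.1 / N p.1 p.2.
have rsym (m : 'I_B) i j : rel m i j -> rel m j i by apply: relp_sym.
have rtr (m : 'I_B) i j k : rel m i j -> rel m j k -> rel m i k by apply: relp_trans.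
have rinv (m : 'I_B) i j : rel m i j -> rel m i =1 rel m j.
  move=> h k; apply/idP/idP => h'; [exact: rtr (rsym _ _ _ h) h' | exact: rtr h h'].
have Ninv (m : 'I_B) i j : rel m i j -> N m i = N m j.
  by move=> h; rewrite /N (eq_bigl _ _ (rinv _ _ _ h)).
have w0 (m : 'I_B) i : ~~ (m < size (P i))%N -> w i m = 0.
  by move=> h; rewrite /w nth_default // leqNgt.
have rrefl (m : 'I_B) i : (m < size (P i))%N -> rel m i i by move=> h; rewrite /rel /relp h eqxx.
have N1 (m : 'I_B) i : (m < size (P i))%N -> 1 <= N m i.
  move=> h; rewrite /N (bigD1 i) ?rrefl //= lerDl; exact: sumr_ge0.
have wge0 (m : 'I_B) i : 0 <= w i m.
  case: (ltnP m (size (P i))) => h; first exact: (all_nthP _ (Hnn i)).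
  by rewrite /w nth_default.
have aN (m : 'I_B) i : a (m, i) * N m i = w i m.
  case: (ltnP m (size (P i))) => h.
    by rewrite /a /= divfK // gt_eqF // (lt_le_trans ltr01 (N1 _ _ h)).
  by rewrite /a /= w0 -?leqNgt // !mul0r.
have swap (m : 'I_B) (F G : 'I_n -> R) : (forall i j, rel m i j -> F i = F j) ->
    \sum_i F i * (\sum_(j | rel m i j) G j) = \sum_i G i * F i * N m i.
  move=> HF.
  under eq_bigr do rewrite mulr_sumr big_mkcond.
  rewrite exchange_big /=; apply: eq_bigr => j _.
  rewrite /N mulr_sumr [RHS]big_mkcond; apply: eq_bigr => i _.
  case h: (rel m i j).
    by rewrite (rsym _ _ _ h) (HF _ _ h) mulr1 mulrC.
  case h': (rel m j i) => //.
  by rewrite (rsym _ _ _ h') in h.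
pose S (x : 'I_n -> R) (m : 'I_B) i := \sum_(j | rel m i j) x j.
have Sinv x (m : 'I_B) i j : rel m i j -> S x m i = S x m j.
  by move=> h; rewrite /S (eq_bigl _ _ (rinv _ _ _ h)).
have ainv (m : 'I_B) i j : rel m i j -> a (m, i) = a (m, j).
  by move=> h; rewrite /a /= /w (Hcoh i j m h) (Ninv _ _ _ h).
have hs x : \sum_i x i = \sum_p a p * S x p.1 p.2.
  rewrite -(pair_bigA _ (fun m i => a (m, i) * S x m i)) /=.
  transitivity (\sum_(m < B) \sum_i x i * w i m).
    rewrite exchange_big /=; apply: eq_bigr => i _.
    by rewrite -mulr_sumr /w -(plen_sum (hB i)) H1 mulr1.
  apply: eq_bigr => m _; rewrite (swap m (fun i => a (m, i)) x); last exact: ainv.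
  by apply: eq_bigr => i _; rewrite -mulrA aN.
have hq x : \sum_i \sum_j x i * x j * cpl (P i) (P j) = \sum_p a p * S x p.1 p.2 ^+ 2.
  rewrite -(pair_bigA _ (fun m i => a (m, i) * S x m i ^+ 2)) /=.
  transitivity (\sum_(m < B) \sum_i x i * w i m * S x m i).
    rewrite [RHS]exchange_big /=; apply: eq_bigr => i _.
    under eq_bigr => j _ do rewrite (cpl_sum _ (hB i)) mulr_sumr.
    rewrite exchange_big /=; apply: eq_bigr => m _.
    rewrite /S mulr_sumr [RHS]big_mkcond /=; apply: eq_bigr => j _.
    rewrite /rel /relp /w; case: ifP => _; [ring | by rewrite mulr0].
  apply: eq_bigr => m _.
  have E := swap m (fun i => a (m, i) * S x m i) x.
  rewrite /= in E.
  rewrite [RHS](eq_bigr (fun i => (a (m, i) * S x m i) * S x m i)); last first.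
    by move=> i _; rewrite expr2 mulrA.
  rewrite E; last by move=> i j h; rewrite (ainv _ _ _ h) (Sinv _ _ _ _ h).
  by apply: eq_bigr => i _; rewrite -(aN m i); ring.
have age0 (p : 'I_B * 'I_n) : 0 <= a p by rewrite divr_ge0 // sumr_ge0.
case: (pickP (fun m : 'I_B => rel m i0 j0 && (0 < w i0 m))) => [m0 /andP [hr hw] | hnone]; last first.
  exfalso; have : cpl (P i0) (P j0) <= 0.
    rewrite (cpl_sum _ (hB i0)); apply: sumr_le0 => m _; case: ifP => h //.
    by have := hnone m; rewrite /rel h /= => /negbT; rewrite -leNgt.
  by rewrite leNgt Hpos.
have hsz : (m0 < size (P i0))%N by case/andP: hr.
have N2 : 2 <= N m0 i0.
  rewrite /N (bigD1 i0) ?rrefl // (bigD1 j0) /=; last by rewrite hr eq_sym ne.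
  have : 0 <= \sum_(i | (rel m0 i0 i && (i != i0)) && (i != j0)) (1:R) by apply: sumr_ge0.
  lra.
have Npos : 0 < N m0 i0 by lra.
have aw : a (m0, i0) < w i0 m0.
  rewrite /a /= ltr_pdivrMr //.
  have : 0 < w i0 m0 * (N m0 i0 - 1) by apply: mulr_gt0 => //; lra.
  rewrite mulrBr mulr1; lra.
have alew (p : 'I_B * 'I_n) : a p <= w p.2 p.1.
  case: (ltnP p.1 (size (P p.2))) => h.
    have hN := N1 _ _ h.
    rewrite /a ler_pdivrMr; last by lra.
    exact: ler_peMr.
  by rewrite /a w0 -?leqNgt // mul0r.
have hn : n%:R = \sum_p w p.2 p.1.
  transitivity (\sum_(i < n) plen (P i)).
    by rewrite (eq_bigr (fun _ => 1)) // sumr_const card_ord.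
  rewrite -(pair_bigA _ (fun m i => w i m)) exchange_big /=; apply: eq_bigr => i _.
  exact: (plen_sum (hB i)).
exists (\sum_p a p); split.
- rewrite (bigD1 (m0, i0)) //=.
  have : 0 <= \sum_(p | p != (m0, i0)) a p by apply: sumr_ge0.
  have : 0 < a (m0, i0) by rewrite divr_gt0.
  lra.
- rewrite hn (bigD1 (m0, i0)) // [X in _ < X](bigD1 (m0, i0)) //=.
  by apply: ltr_leD => //; apply: ler_sum => p _.
- move=> x; rewrite hs hq; apply: cs_sum => //.
  rewrite (bigD1 (m0, i0)) //=.
  have : 0 <= \sum_(p | p != (m0, i0)) a p by apply: sumr_ge0.
  have : 0 < a (m0, i0) by rewrite divr_gt0.
  lra.
Qed.



Lemma qform n (D : 'M[R]_n) (U : 'I_n -> 'I_n -> R) c :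
  (forall i j, D i j = 2 - 2 * U i j) ->
  ctest D c <-> forall x : 'cV[R]_n,
    0 <= (c - 1) * (\sum_i x i 0) ^+ 2 + \sum_i \sum_j x i 0 * x j 0 * U i j.
Proof.
move=> HD.
suff E : forall x : 'cV[R]_n, (x^T *m (c *: const_mx 1 - 2^-1 *: D) *m x) 0 0 =
    (c - 1) * (\sum_i x i 0) ^+ 2 + \sum_i \sum_j x i 0 * x j 0 * U i j.
  by rewrite /ctest /psd; split=> H x; [rewrite -E | rewrite E].
move=> x; rewrite mxE; under eq_bigr => j _ do rewrite mxE big_distrl /=.
rewrite exchange_big /= expr2 mulr_suml mulr_sumr -big_split /=; apply: eq_bigr => i _.
rewrite mulr_sumr !mulr_sumr -big_split /=; apply: eq_bigr => j _.
by rewrite !mxE HD /=; field.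
Qed.


Lemma lp_size_pos t : (0 < size (lp t))%N.
Proof.
elim/tree_ind2: t => l IH; rewrite leaf_pathsE; case: l IH => [//|[a s] l] IH /=.
rewrite size_cat size_map; have := IH 0%N isT => /= h.
by rewrite (leq_trans h) // leq_addr.
Qed.

Lemma lca_h t (i j : nat) : ultrametric_radius t 1 -> (i < size (lp t))%N -> (j < size (lp t))%N ->
  lca_height t i j = 1 - cpl (leaf_path t i) (leaf_path t j).
Proof.
move=> [Hnn Hrad] hi hj.
have hp : leaf_path t i \in lp t := mem_nth _ hi.
have hq : leaf_path t j \in lp t := mem_nth _ hj.
set p := leaf_path t i in hp *; set q := leaf_path t j in hq *.
set m := size (common_prefix (map fst p) (map fst q)).
have ea : lca_addr t i j = map fst (take m p) by rewrite /lca_addr map_take -cp_take.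
have ecpl : cpl p q = plen (take m p) := cpl_take p q.
have hsplit : plen (take m p) + plen (drop m p) = 1 by rewrite -plen_cat cat_take_drop Hrad.
rewrite /lca_height ea; apply: bigmax_const.
- move=> r hr; have := Hrad _ (sub_cat hp hr); rewrite plen_cat ecpl; lra.
- by apply/eqP => e; have := sub_drop m hp; rewrite e.
- have hall := lp_nonneg Hnn hp; rewrite -(cat_take_drop m p) all_cat in hall.
  case/andP: hall => _ /plen_ge0; rewrite ecpl; lra.
Qed.

Lemma lca_ne t (i j : nat) : ultrametric_radius t 1 -> leaf_positive t ->
  (i < size (lp t))%N -> (j < size (lp t))%N -> i != j ->
  0 < 1 - cpl (leaf_path t i) (leaf_path t j).
Proof.
move=> [Hnn Hrad] Hlp hi hj hij.
have hp : leaf_path t i \in lp t := mem_nth _ hi.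
have hq : leaf_path t j \in lp t := mem_nth _ hj.
have epn : nth [::] (lp t) i = leaf_path t i by [].
have eqn : nth [::] (lp t) j = leaf_path t j by [].
set p := leaf_path t i in hp epn *; set q := leaf_path t j in hq eqn *.
set m := size (common_prefix (map fst p) (map fst q)).
have ecpl : cpl p q = plen (take m p) := cpl_take p q.
have hsplit : plen (take m p) + plen (drop m p) = 1 by rewrite -plen_cat cat_take_drop Hrad.
case: (ltnP m (size p)) => hm.
  have := lp_pos Hlp Hnn hp hm; lra.
exfalso.
have h1 := sub_drop m hp; rewrite (drop_oversize hm) in h1.
have ea' : map fst (take m p) = map fst (take m q) by rewrite !map_take -cp_take -cp_take_r.
have h2 := sub_drop m hq; rewrite -ea' in h2.
move: h1 h2; case: (subtree t _) => l' /lp_nil ->; rewrite leaf_pathsE inE => /eqP dq.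
have epq : p = q.
  by rewrite -(take_oversize hm) (lp_coh hp hq ea') -[RHS](cat_take_drop m) dq cats0.
move: hij; rewrite -(nth_uniq [::] hi hj (lp_uniq t)) epn eqn epq eqxx //.
Qed.

End S.

From mathcomp Require Import zify.

Theorem proposition2p3 (R : realType) (t : tree R) (c : R) :
  ultrametric_radius t 1 -> leaf_positive t ->
  is_cT (leaf_dist_mx t) c ->
  (c = 1 - (nleaves t)%:R^-1 <-> star_metric t).
Proof.
move=> Hu Hlp [c0 Hct Hmin]; have [Hnn Hrad] := Hu.
have hn0 : (0 < nleaves t)%N by apply: lp_size_pos.
have nR : 0 < (nleaves t)%:R :> R by rewrite ltr0n.
have Hlca := lca_h Hu; have Hne := lca_ne Hu Hlp.
have hD : forall i j : 'I_(nleaves t), leaf_dist_mx t i j = 2 - 2 * cpl (leaf_path t i) (leaf_path t j).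
  move=> i j; rewrite mxE (lp_pdist (mem_nth _ (ltn_ord i)) (mem_nth _ (ltn_ord j))).
  by rewrite !Hrad ?mem_nth //; ring.
have hP (i : 'I_(nleaves t)) : leaf_path t i \in leaf_paths t by apply: mem_nth; exact: ltn_ord.
have hsum1 : \sum_(i < nleaves t) (1:R) = (nleaves t)%:R by rewrite sumr_const card_ord.
split.
- move=> Hc i j hij; right; rewrite Hlca ?ltn_ord //.
  have hge := cpl_ge0 (leaf_path t j) (lp_nonneg Hnn (hP i)).
  have [hpos|hle] := ltrP 0 (cpl (leaf_path t i) (leaf_path t j)); last lra.
  exfalso.
  have hcoh : forall (i j : 'I_(nleaves t)) (m : nat), relp m (leaf_path t i) (leaf_path t j) ->
      (nth (0%N, 0) (leaf_path t i) m).2 = (nth (0%N, 0) (leaf_path t j) m).2.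
    move=> i' j' m /andP [hm /eqP e].
    have e2 := lp_coh (hP i') (hP j') e.
    have : nth (0%N, 0) (take m.+1 (leaf_path t i')) m = nth (0%N, 0) (take m.+1 (leaf_path t j')) m.
      by rewrite e2.
    by rewrite !nth_take // => ->.
  have [L [L0 Ln HL]] := key (P := fun k : 'I_(nleaves t) => leaf_path t k)
     (fun k => lp_nonneg Hnn (hP k)) (fun k => Hrad _ (hP k)) hcoh hij hpos.
  pose c' := Num.max 0 (1 - L^-1).
  have hc'1 : 1 - L^-1 <= c' by rewrite le_max lexx orbT.
  have hc'0 : 0 <= c' by rewrite le_max lexx.
  have hc' : ctest (leaf_dist_mx t) c'.
    apply/(qform c' hD) => x.
    have := HL (fun k => x k 0).
    set s := \sum_i x i 0; set Q := \sum_i \sum_j _ => hsQ.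
    have e1 : -(L^-1) * s ^+ 2 <= (c' - 1) * s ^+ 2 by apply: ler_wpM2r; [exact: sqr_ge0 | lra].
    have e2 : L^-1 * s ^+ 2 <= Q.
      by rewrite -(ler_pM2l L0) mulrA mulfV ?gt_eqF // mul1r.
    rewrite mulNr in e1; lra.
  have hcc : c <= c' := Hmin c' hc'0 hc'.
  have n1 : (1 < nleaves t)%N.
    have hi := ltn_ord i; have hj := ltn_ord j.
    have hv : ((i : nat) != j) by [].
    lia.
  have hlt1 : (nleaves t)%:R^-1 < 1 :> R by rewrite invf_lt1 // ltr1n.
  have hlt2 : (nleaves t)%:R^-1 < L^-1 by rewrite ltf_pV2 ?posrE.
  have : c' < 1 - (nleaves t)%:R^-1.
    rewrite gt_max; apply/andP; split; lra.
  lra.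
- move=> Hstar.
  have Uid (i j : 'I_(nleaves t)) : cpl (leaf_path t i) (leaf_path t j) = (i == j)%:R.
    case: (eqVneq i j) => [->|hij]; first by rewrite cpl_refl (Hrad _ (hP j)).
    have := Hne i j (ltn_ord i) (ltn_ord j) hij.
    case: (Hstar i j hij); rewrite Hlca ?ltn_ord // => h; rewrite /=; lra.
  have hform (x : 'cV[R]_(nleaves t)) : \sum_i \sum_j x i 0 * x j 0 * cpl (leaf_path t i) (leaf_path t j)
      = \sum_i x i 0 ^+ 2.
    apply: eq_bigr => i _; rewrite (bigD1 i) //= Uid eqxx mulr1 big1 ?addr0 ?expr2 //.
    by move=> j hj; rewrite Uid eq_sym (negbTE hj) mulr0.
  have H1 : ctest (leaf_dist_mx t) (1 - (nleaves t)%:R^-1).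
    apply/(qform _ hD) => x; rewrite hform.
    have := @cs_sum R _ (fun _ : 'I_(nleaves t) => 1) (fun i => x i 0) (fun _ => ler01).
    rewrite hsum1 => /(_ nR).
    have -> : \sum_i 1 * x i 0 = \sum_i x i 0 by apply: eq_bigr => i _; rewrite mul1r.
    have -> : \sum_i 1 * x i 0 ^+ 2 = \sum_i x i 0 ^+ 2 by apply: eq_bigr => i _; rewrite mul1r.
    set s := \sum_i x i 0; set Q := \sum_i x i 0 ^+ 2 => hsQ.
    have e2 : (nleaves t)%:R^-1 * s ^+ 2 <= Q.
      by rewrite -(ler_pM2l nR) mulrA mulfV ?gt_eqF // mul1r.
    have -> : (1 - (nleaves t)%:R^-1 - 1) * s ^+ 2 = - ((nleaves t)%:R^-1 * s ^+ 2) by ring.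
    lra.
  have H2 : c <= 1 - (nleaves t)%:R^-1.
    apply: Hmin H1; rewrite subr_ge0 invf_le1 // ler1n //.
  have H3 : 1 - (nleaves t)%:R^-1 <= c.
    have := (iffLR (qform c hD) Hct) (const_mx 1); rewrite hform.
    have -> : \sum_(i < nleaves t) (const_mx 1 : 'cV[R]_(nleaves t)) i 0 = (nleaves t)%:R.
      by rewrite -hsum1; apply: eq_bigr => i _; rewrite mxE.
    have -> : \sum_(i < nleaves t) (const_mx 1 : 'cV[R]_(nleaves t)) i 0 ^+ 2 = (nleaves t)%:R.
      by rewrite -hsum1; apply: eq_bigr => i _; rewrite mxE expr1n.
    have e : (c - 1) * (nleaves t)%:R ^+ 2 + (nleaves t)%:R
        = (nleaves t)%:R * ((c - 1) * (nleaves t)%:R + 1) by ring.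
    rewrite e pmulr_rge0 // => h.
    have : 0 <= (nleaves t)%:R^-1 * ((c - 1) * (nleaves t)%:R + 1).
      by rewrite mulr_ge0 // invr_ge0 ltW.
    have -> : (nleaves t)%:R^-1 * ((c - 1) * (nleaves t)%:R + 1) = c - 1 + (nleaves t)%:R^-1.
      by field; rewrite gt_eqF.
    lra.
  by apply: le_anti; rewrite H2 H3.
Qed.
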